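(* Let $K\ge L\ge 1$ and $T\ge 1$ be integers, let $\mathbb{F}_p$ be a finite field, $q$ a positive integer, $\omega\in\mathbb{F}_p$ a primitive $q$-th root of unity (so $q\mid p-1$), and consider the polynomial-code PDMM scheme with degree vectors of $\mathrm{GASP}_{\mathrm{small}}$ (resp. $\mathrm{GASP}_{\mathrm{big}}$), $N$ workers where $N$ is the number of distinct integers in its degree table, and evaluation points $\rho_n=\omega^{n-1}$, $n=1,\dots,N$. If $q$ is larger than the largest entry of the degree table and $q$ is coprime to $K$, then the $\mathrm{GASP}_{\mathrm{small}}$ scheme is decodable and $T$-private. For $\mathrm{GASP}_{\mathrm{big}}$, the condition that $q$ is larger than the largest entry of the degree table (together with $\omega$ being a primitive $q$-th root of unity) suffices for the scheme to be decodable and $T$-private.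
   Context: Generalized arithmetic progression: $\mathrm{GAP}(\ell,x,r)\in\mathbb{Z}^\ell$ is the vector consisting of the first $\ell$ terms of $(0,1,\dots,r-1,\;x,x+1,\dots,x+r-1,\;2x,2x+1,\dots,2x+r-1,\dots)$. For $1\le r\le\min(K,T)$, $\mathrm{GASP}_r(K,L,T)$ is given by integer degree vectors $\boldsymbol{\alpha}^{(p)}=(0,1,\dots,K-1)$, $\boldsymbol{\alpha}^{(s)}=KL+\mathrm{GAP}(T,K,r)$, $\boldsymbol{\beta}^{(p)}=K\cdot(0,1,\dots,L-1)$, $\boldsymbol{\beta}^{(s)}=KL+(0,1,\dots,T-1)$ (adding a scalar to a vector adds it to each entry). $\mathrm{GASP}_{\mathrm{small}}$ is the case $r=1$ and $\mathrm{GASP}_{\mathrm{big}}$ the case $r=\min(K,T)$. The degree table is the set of all sums $a+b$ with $a$ an entry of $\boldsymbol{\alpha}^{(p)}$ or $\boldsymbol{\alpha}^{(s)}$ and $b$ an entry of $\boldsymbol{\beta}^{(p)}$ or $\boldsymbol{\beta}^{(s)}$. The scheme: $\mathbf A\in\mathbb{F}_p^{r_A\times c_A}$, $\mathbf B\in\mathbb{F}_p^{c_A\times c_B}$ with arbitrary joint distribution, $K\mid r_A$, $L\mid c_B$; $\mathbf A=(\mathbf A_1^T\cdots\mathbf A_K^T)^T$, $\mathbf B=(\mathbf B_1\cdots\mathbf B_L)$ split into equal blocks. Random $\mathbf R_1,\dots,\mathbf R_T$ (size of $\mathbf A_i$) and $\mathbf S_1,\dots,\mathbf S_T$ (size of $\mathbf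 B_j$) are i.i.d. uniform and independent of $(\mathbf A,\mathbf B)$. $\mathbf F(x)=\sum_i\mathbf A_ix^{\alpha^{(p)}_i}+\sum_i\mathbf R_ix^{\alpha^{(s)}_i}$, $\mathbf G(x)=\sum_j\mathbf B_jx^{\beta^{(p)}_j}+\sum_j\mathbf S_jx^{\beta^{(s)}_j}$; worker $n$ receives $\mathbf F(\rho_n),\mathbf G(\rho_n)$ and returns $\mathbf F(\rho_n)\mathbf G(\rho_n)$. $T$-private: for every set of $T$ workers, the mutual information between $(\mathbf A,\mathbf B)$ and their received data is zero. Decodable: the main node can compute all $\mathbf A_i\mathbf B_j$ from the $N$ returned products. *)

(* Defs.v *)
From HB Require Import structures.
From mathcomp Require Import all_boot all_order all_algebra.
From mathcomp Require Import zify.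
From mathcomp Require Import reals exp.
Set Implicit Arguments.
Unset Strict Implicit.
Unset Printing Implicit Defensive.
Import Order.TTheory GRing.Theory Num.Theory.
Local Open Scope ring_scope.

(* k-th term (k >= 0) of (0,1,..,r-1, x,..,x+r-1, 2x,..,2x+r-1, ...) *)
Definition gap_term (x r k : nat) : nat := ((k %/ r) * x + k %% r)%N.
Definition GAP (l x r : nat) : seq nat := mkseq (gap_term x r) l.

(* GASP_r(K, L, T) degree vectors (entries, 0-indexed) *)
Definition alpha_p (i : nat) : nat := i.
Definition alpha_s (K L T r t : nat) : nat := (K * L + nth 0%N (GAP T K r) t)%N.
Definition beta_p (K j : nat) : nat := (K * j)%N.
Definition beta_s (K L t : nat) : nat := (K * L + t)%N.

Definition alpha_vec (K L T r : nat) : seq nat :=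
  [seq alpha_p i | i <- iota 0 K] ++ [seq alpha_s K L T r t | t <- iota 0 T].
Definition beta_vec (K L T : nat) : seq nat :=
  [seq beta_p K j | j <- iota 0 L] ++ [seq beta_s K L t | t <- iota 0 T].

Definition degree_table (K L T r : nat) : seq nat :=
  [seq (a + b)%N | a <- alpha_vec K L T r, b <- beta_vec K L T].

Definition nworkers (K L T r : nat) : nat := size (undup (degree_table K L T r)).

Definition max_degree (K L T r : nat) : nat := \max_(d <- degree_table K L T r) d.

Lemma blk_lt (K m : nat) (i : 'I_K) (k : 'I_m) : (i * m + k < K * m)%N.
Proof. have hi := ltn_ord i; have hk := ltn_ord k; nia. Qed.

Definition blockA (p K m n : nat) (A : 'M['F_p]_(K * m, n)) (i : 'I_K) : 'M['F_p]_(m, n) :=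
  \matrix_(k < m, l < n) A (Ordinal (blk_lt i k)) l.
Definition blockB (p L s n : nat) (B : 'M['F_p]_(n, L * s)) (j : 'I_L) : 'M['F_p]_(n, s) :=
  \matrix_(k < n, l < s) B k (Ordinal (blk_lt j l)).

Definition Fenc (p K L T r m n : nat) (A : 'M['F_p]_(K * m, n))
  (Rr : {ffun 'I_T -> 'M['F_p]_(m, n)}) (x : 'F_p) : 'M['F_p]_(m, n) :=
  \sum_(i < K) (x ^+ alpha_p i) *: blockA A i
  + \sum_(t < T) (x ^+ alpha_s K L T r t) *: Rr t.

Definition Genc (p K L T m n s : nat) (B : 'M['F_p]_(n, L * s))
  (Ss : {ffun 'I_T -> 'M['F_p]_(n, s)}) (x : 'F_p) : 'M['F_p]_(n, s) :=
  \sum_(j < L) (x ^+ beta_p K j) *: blockB B j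
  + \sum_(t < T) (x ^+ beta_s K L t) *: Ss t.

(* evaluation point of worker w (0-indexed w = n-1): rho_n = omega^(n-1) *)
Definition rho (p : nat) (omega : 'F_p) (N : nat) (w : 'I_N) : 'F_p := omega ^+ w.

(* secret x ~ P (arbitrary distribution on the finite type X), randomness z
   uniform on the finite type Z independent of x, observation y = f x z. *)
Section MI.
Variables (R : realType) (X Z Y : finType).

Definition joint (P : {ffun X -> R}) (f : X -> Z -> Y) (x : X) (y : Y) : R :=
  P x * (#|[set z : Z | f x z == y]|%:R / #|Z|%:R).
Definition marg_x (P : {ffun X -> R}) (f : X -> Z -> Y) (x : X) : R :=
  \sum_(y : Y) joint P f x y.
Definition marg_y (P : {ffun X -> R}) (f : X -> Z -> Y) (y : Y) : R :=
  \sum_(x : X) joint P f x y.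

Definition mutual_info (P : {ffun X -> R}) (f : X -> Z -> Y) : R :=
  \sum_(x : X) \sum_(y : Y)
    (if joint P f x y == 0 then 0
     else joint P f x y * ln (joint P f x y / (marg_x P f x * marg_y P f y))).

Definition is_distribution (P : {ffun X -> R}) : Prop :=
  (forall x, 0 <= P x) /\ \sum_(x : X) P x = 1.
End MI.

Definition secret_t (p K L m n s : nat) : finType :=
  ('M['F_p]_(K * m, n) * 'M['F_p]_(n, L * s))%type.
Definition random_t (p T m n s : nat) : finType :=
  ({ffun 'I_T -> 'M['F_p]_(m, n)} * {ffun 'I_T -> 'M['F_p]_(n, s)})%type.

Definition decodable (p K L T r : nat) (omega : 'F_p) (m n s : nat) : Prop :=
  let N := nworkers K L T r in
  exists dec : ('I_N -> 'M['F_p]_(m, s)) -> 'I_K -> 'I_L -> 'M['F_p]_(m, s),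
    forall (A : 'M['F_p]_(K * m, n)) (B : 'M['F_p]_(n, L * s))
           (Rr : {ffun 'I_T -> 'M['F_p]_(m, n)}) (Ss : {ffun 'I_T -> 'M['F_p]_(n, s)})
           (i : 'I_K) (j : 'I_L),
      dec (fun w => @Fenc p K L T r m n A Rr (rho omega w) *m @Genc p K L T m n s B Ss (rho omega w)) i j
      = blockA A i *m blockB B j.

Definition view (p K L T r : nat) (omega : 'F_p) (m n s : nat)
  (W : {set 'I_(nworkers K L T r)})
  (x : secret_t p K L m n s) (z : random_t p T m n s)
  : {ffun 'I_(nworkers K L T r) -> option ('M['F_p]_(m, n) * 'M['F_p]_(n, s))} :=
  [ffun w => if w \in W then
       Some (@Fenc p K L T r m n x.1 z.1 (rho omega w), @Genc p K L T m n s x.2 z.2 (rho omega w))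
     else None].

Definition T_private (R : realType) (p K L T r : nat) (omega : 'F_p) (m n s : nat) : Prop :=
  forall (P : {ffun secret_t p K L m n s -> R}), is_distribution P ->
  forall W : {set 'I_(nworkers K L T r)}, #|W| = T ->
    mutual_info P (@view p K L T r omega m n s W) = 0.

(* Main.v *)
Require Import Defs.
From HB Require Import structures.
From mathcomp Require Import all_boot all_order all_algebra.
From mathcomp Require Import reals exp.
From mathcomp Require Import zify ring.
Set Implicit Arguments.
Unset Strict Implicit.
Unset Printing Implicit Defensive.
Import Order.TTheory GRing.Theory Num.Theory.
Local Open Scope ring_scope.
Lemma solve_lin (F : finFieldType) (I : finType) (W : {set I}) (T : nat)
  (u c : I -> F) (m n : nat) (Y : I -> 'M[F]_(m,n)) :
  #|W| = T -> {in W &, injective u} -> (forall w, w \in W -> c w != 0) ->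
  exists d : {ffun 'I_T -> 'M[F]_(m,n)},
    forall w, w \in W -> \sum_(t < T) (c w * u w ^+ t) *: d t = Y w.
Proof.
move=> hW hu hc.
pose f (d : {ffun 'I_T -> 'M[F]_(m,n)}) : {ffun {x : I | x \in W} -> 'M[F]_(m,n)} :=
  [ffun w => \sum_(t < T) (c (val w) * u (val w) ^+ t) *: d t].
have finj : injective f.
  move=> d1 d2 /ffunP hf; apply/ffunP => t; apply/matrixP => a b.
  pose E (i : nat) := if (insub i : option 'I_T) is Some t then d1 t a b - d2 t a b else 0.
  pose P := \poly_(i < T) E i.
  have P0 : P = 0.
    apply: (@roots_geq_poly_eq0 _ P [seq u w | w <- enum W]).
    - apply/allP => x /mapP [w]; rewrite mem_enum => wW ->.
      have := hf (exist _ w wW); rewrite !ffunE /= => /(congr1 (fun M : 'M[F]_(m,n) => M a b)).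
      rewrite !summxE /= => e.
      rewrite (eq_bigr (fun k : 'I_T => (c w * u w ^+ k) * d1 k a b)) in e; last by move=> k _; rewrite mxE.
      rewrite [RHS](eq_bigr (fun k : 'I_T => (c w * u w ^+ k) * d2 k a b)) in e; last by move=> k _; rewrite mxE.
      rewrite /root horner_poly.
      have : c w * \sum_(i < T) E i * u w ^+ i == 0.
        apply/eqP; rewrite mulr_sumr.
        transitivity (\sum_(t < T) (c w * u w ^+ t) * d1 t a b - \sum_(t < T) (c w * u w ^+ t) * d2 t a b); last by rewrite e subrr.
        rewrite -sumrB; apply: eq_bigr => i _.
        by rewrite /E valK; ring.
      by rewrite mulf_eq0 (negbTE (hc w wW)).
    - by rewrite map_inj_in_uniq ?enum_uniq // => x y; rewrite !mem_enum; apply: hu.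
    - by rewrite size_map -cardE hW size_poly.
  have := congr1 (fun P : {poly F} => P`_t) P0.
  rewrite coef_poly ltn_ord /E valK coef0 => /eqP; rewrite subr_eq0 => /eqP.
  done.
have hc' : (#|{ffun {x : I | x \in W} -> 'M[F]_(m,n)}| <= #|{ffun 'I_T -> 'M[F]_(m,n)}|)%N.
  by rewrite !card_ffun card_sig /= card_ord -hW (eq_card (B := W)). 
have /codomP [d hd] := inj_card_onto finj hc' [ffun w => Y (val w)].
 exists d => w wW.

move/ffunP: hd => /(_ (exist _ w wW)); rewrite !ffunE.
by [].
Qed.
Lemma cnt_sum (Z Y : finType) (g : Z -> Y) :
  (\sum_(y : Y) #|[set z | g z == y]| = #|Z|)%N.
Proof.
rewrite -sum1_card (partition_big g xpredT) //=.
apply: eq_bigr => y _; rewrite -sum1_card; apply: eq_bigl => z; by rewrite inE.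
Qed.

Lemma mi_zero (R : realType) (X Z Y : finType) (P : {ffun X -> R})
  (f : X -> Z -> Y) (x0 : X) :
  (forall x y, #|[set z | f x z == y]| = #|[set z | f x0 z == y]|) ->
  is_distribution P -> mutual_info P f = 0.
Proof.
move=> hc [_ hP]; apply: big1 => x _; apply: big1 => y _.
case: eqP => // hj.
set N : R := #|Z|%:R.
set c : R := #|[set z | f x0 z == y]|%:R.
have ej : forall x', joint P f x' y = P x' * (c / N) by move=> x'; rewrite /joint hc.
have emx : marg_x P f x = P x * (N / N).
  rewrite /marg_x /joint -mulr_sumr -mulr_suml -natr_sum.
  by under eq_bigr do rewrite hc; rewrite cnt_sum.
have emy : marg_y P f y = c / N.
  by rewrite /marg_y; under eq_bigr do rewrite ej; rewrite -mulr_suml hP mul1r.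
move: hj; rewrite emx emy ej => hj.
have hPx : P x != 0 by apply/eqP => h; apply: hj; rewrite h; rewrite mul0r.
have hN : N != 0 by apply/eqP => h; apply: hj; rewrite h; rewrite invr0 !mulr0.
have hcN : c / N != 0 by apply/eqP => h; apply: hj; rewrite h; rewrite mulr0.
by rewrite divff // mulr1 (divff (mulf_neq0 hPx hcN)) ln1 mulr0.
Qed.
Lemma blockA0 p K m n (i : 'I_K) : @blockA p K m n 0 i = 0.
Proof. by apply/matrixP => a b; rewrite !mxE. Qed.
Lemma blockB0 p L s n (j : 'I_L) : @blockB p L s n 0 j = 0.
Proof. by apply/matrixP => a b; rewrite !mxE. Qed.

Lemma priv (R : realType) p K L T r (om : 'F_p) m n s e :
  (forall t : 'I_T, alpha_s K L T r t = K * L + t * e)%N ->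
  (forall w w' : 'I_(nworkers K L T r), (om ^+ w) ^+ e = (om ^+ w') ^+ e -> w = w') ->
  (forall w w' : 'I_(nworkers K L T r), om ^+ w = om ^+ w' -> w = w') ->
  om != 0 ->
  @T_private R p K L T r om m n s.
Proof.
move=> ha hu hu1 hom P hP W hW.
apply: (@mi_zero _ _ _ _ P _ (0, 0)) => // x y.
have [d1 hd1] := @solve_lin _ _ W T (fun w => (om ^+ w) ^+ e) (fun w => (om ^+ w) ^+ (K * L))
   m n (fun w => \sum_(i < K) (rho om w ^+ alpha_p i) *: blockA x.1 i) hW
   (fun w w' _ _ => hu w w') (fun w _ => expf_neq0 _ (expf_neq0 _ hom)).
have [d2 hd2] := @solve_lin _ _ W T (fun w => om ^+ w) (fun w => (om ^+ w) ^+ (K * L))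
   n s (fun w => \sum_(j < L) (rho om w ^+ beta_p K j) *: blockB x.2 j) hW
   (fun w w' _ _ => hu1 w w') (fun w _ => expf_neq0 _ (expf_neq0 _ hom)).
pose h (z : random_t p T m n s) : random_t p T m n s :=
  ([ffun t => z.1 t + d1 t], [ffun t => z.2 t + d2 t]).
have hinj : injective h.
  move=> [z1 z2] [z1' z2'] [] /ffunP e1 /ffunP e2; congr (_, _); apply/ffunP => t.
    by have := e1 t; rewrite !ffunE => /addIr.
  by have := e2 t; rewrite !ffunE => /addIr.
rewrite -[RHS](card_preimset _ hinj); apply: eq_card => z; rewrite !inE.
suff -> : view om W (0, 0) (h z) = view om W x z by [].
apply/ffunP => w; rewrite !ffunE; case: ifP => // wW; congr Some; congr (_, _).
  rewrite /Fenc /=; under eq_bigr do rewrite blockA0 scaler0.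
  rewrite big1 // add0r; under eq_bigr do rewrite ffunE scalerDr.
  rewrite big_split /= addrC; congr (_ + _); rewrite -(hd1 w wW).
  apply: eq_bigr => t _; rewrite ha /rho exprD -!exprM; congr ((_ * om ^+ _) *: _); lia.
rewrite /Genc /=; under eq_bigr do rewrite blockB0 scaler0.
rewrite big1 // add0r; under eq_bigr do rewrite ffunE scalerDr.
rewrite big_split /= addrC; congr (_ + _); rewrite -(hd2 w wW).
  apply: eq_bigr => t _; rewrite /beta_s /rho exprD -!exprM; congr ((_ * om ^+ _) *: _); lia.
Qed.

Definition Xf p K T m n (A : 'M['F_p]_(K * m, n)) (Rr : {ffun 'I_T -> 'M['F_p]_(m, n)})
  (a : 'I_K + 'I_T) : 'M['F_p]_(m, n) :=
  match a with inl i => blockA A i | inr t => Rr t end.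
Definition af K L T r (a : 'I_K + 'I_T) : nat :=
  match a with inl i => alpha_p i | inr t => alpha_s K L T r t end.
Definition Yg p L T n s (B : 'M['F_p]_(n, L * s)) (Ss : {ffun 'I_T -> 'M['F_p]_(n, s)})
  (b : 'I_L + 'I_T) : 'M['F_p]_(n, s) :=
  match b with inl j => blockB B j | inr t => Ss t end.
Definition bg K L T (b : 'I_L + 'I_T) : nat :=
  match b with inl j => beta_p K j | inr t => beta_s K L t end.

Lemma prod_sum p K L T r m n s A Rr B Ss (x : 'F_p) :
  @Fenc p K L T r m n A Rr x *m @Genc p K L T m n s B Ss x =
  \sum_(e : ('I_K + 'I_T) * ('I_L + 'I_T))
     x ^+ (@af K L T r e.1 + @bg K L T e.2) *: (Xf A Rr e.1 *m Yg B Ss e.2).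
Proof.
have -> : @Fenc p K L T r m n A Rr x = \sum_a x ^+ @af K L T r a *: Xf A Rr a.
  by rewrite /Fenc big_sumType.
have -> : @Genc p K L T m n s B Ss x = \sum_b x ^+ @bg K L T b *: Yg B Ss b.
  by rewrite /Genc big_sumType.
rewrite mulmx_suml.
rewrite -(pair_bigA _ (fun a b => x ^+ (@af K L T r a + @bg K L T b) *: (Xf A Rr a *m Yg B Ss b))) /=.
apply: eq_bigr => a _.
rewrite mulmx_sumr; apply: eq_bigr => b _.
by rewrite -scalemxAl -scalemxAr scalerA exprD.
Qed.

Lemma deg_mem K L T r (e : ('I_K + 'I_T) * ('I_L + 'I_T)) :
  (@af K L T r e.1 + @bg K L T e.2)%N \in undup (degree_table K L T r).
Proof.
rewrite mem_undup; apply: (allpairs_f addn).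
  case: e => [[i|t] _] /=; rewrite mem_cat; apply/orP; [left|right];
  by apply: map_f; rewrite mem_iota /= add0n ltn_ord.
case: e => [_ [j|t]] /=; rewrite mem_cat; apply/orP; [left|right];
by apply: map_f; rewrite mem_iota /= add0n ltn_ord.
Qed.

Lemma divmod_uniq (K a b c d : nat) : (a < K -> c < K -> a + K * b = c + K * d -> a = c /\ b = d)%N.
Proof.
move=> ha hc h.
have e1 : a = c.
  have := congr1 (modn^~ K) h; rewrite /= !(addnC _ (K * _)%N) !(mulnC K) !modnMDl !modn_small //.
split=> //; move: h; rewrite e1 => /addnI /eqP; rewrite eqn_mul2l; case/orP => [/eqP K0|/eqP //].
by move: ha; rewrite K0.
Qed.

Lemma deg_uniq K L T r (i : 'I_K) (j : 'I_L) (e : ('I_K + 'I_T) * ('I_L + 'I_T)) :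
  ((@af K L T r e.1 + @bg K L T e.2)%N == (i + K * j)%N) = (e == (inl i, inl j)).
Proof.
have hi := ltn_ord i; have hj := ltn_ord j.
have hKL : (K * j.+1 <= K * L)%N by rewrite leq_mul2l hj orbT.
case: e => [[i'|t] [j'|t']] /=; rewrite /alpha_p /alpha_s /beta_p /beta_s.
- have hi' := ltn_ord i'; have hj' := ltn_ord j'.
  apply/eqP/eqP => [h|[-> ->]] //.
  have [ei ej] := divmod_uniq hi' hi h.
  by congr (_, _); congr inl; apply: val_inj.
- case: eqP => h; first lia. by apply/esym/eqP => e0; congruence.
- case: eqP => h; first lia. by apply/esym/eqP => e0; congruence.
- case: eqP => h; first lia. by apply/esym/eqP => e0; congruence.
Qed.
Lemma group_lemma (F : fieldType) (om : F) q (ds : seq nat) (E : finType) (d : E -> nat)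
  m s (M : E -> 'M[F]_(m, s)) :
  q.-primitive_root om -> uniq ds -> all (fun x => x < q)%N ds -> (forall e, d e \in ds) ->
  (forall w : 'I_(size ds), \sum_e (om ^+ w) ^+ (d e) *: M e = 0) ->
  forall k : 'I_(size ds), \sum_(e | d e == nth 0%N ds k) M e = 0.
Proof.
move=> hq hu hlt hd H.
set N := size ds.
pose S (k : 'I_N) := \sum_(e | d e == nth 0%N ds k) M e.
have eS : forall x, \sum_e x ^+ d e *: M e = \sum_(k < N) x ^+ nth 0%N ds k *: S k.
  move=> x; under [RHS]eq_bigr do rewrite scaler_sumr.
  rewrite (exchange_big_dep xpredT) //=; apply: eq_bigr => e _.
  have k0lt : (index (d e) ds < N)%N by rewrite index_mem.
  rewrite (big_pred1 (Ordinal k0lt)) /= ?nth_index //.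
  move=> k /=; apply/eqP/eqP => [h|->]; last by rewrite nth_index.
  by apply: val_inj => /=; rewrite h index_uniq.
have hne : forall i j : 'I_N, om ^+ nth 0%N ds i = om ^+ nth 0%N ds j -> i = j.
  move=> i j /eqP; rewrite (eq_prim_root_expr hq) !modn_small;
    try by apply: (allP hlt); rewrite mem_nth.
  by move/eqP => h; apply: val_inj; apply/eqP; rewrite -(nth_uniq 0%N _ _ hu) ?h ?ltn_ord.
pose V := Vandermonde N (\row_(k < N) om ^+ nth 0%N ds k).
have hV : V \in unitmx.
  rewrite unitmxE unitfE /V det_Vandermonde.
  apply/prodf_neq0 => i _; apply/prodf_neq0 => j hij; rewrite !mxE subr_eq0.
  by apply/eqP => /hne hji; move: hij; rewrite hji ltnn.
move=> k; apply/matrixP => a b; rewrite mxE.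
pose D := \col_(k < N) S k a b.
have VD : V *m D = 0.
  apply/matrixP => w z; rewrite !mxE.
  have := congr1 (fun M : 'M[F]_(m, s) => M a b) (H w).
  rewrite eS /= summxE mxE => e0; rewrite -[RHS]e0; apply: eq_bigr => j _.
  by rewrite !mxE exprAC.
have := congr1 (fun M : 'M[F]_(N, 1) => M k ord0) (mulKmx hV D).
by rewrite VD mulmx0 !mxE.
Qed.

Lemma dec_ok p K L T r (om : 'F_p) q m n s :
  q.-primitive_root om -> (max_degree K L T r < q)%N -> @decodable p K L T r om m n s.
Proof.
move=> hq hmax.
set ds := undup (degree_table K L T r).
have hall : all (fun x => x < q)%N ds.
  apply/allP => x; rewrite mem_undup => hx; apply: leq_ltn_trans hmax.
  exact: (@leq_bigmax_seq _ _ xpredT id x hx isT).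
pose prods (x : (secret_t p K L m n s * random_t p T m n s)%type) :
  {ffun 'I_(nworkers K L T r) -> 'M['F_p]_(m, s)} :=
  [ffun w => @Fenc p K L T r m n x.1.1 x.2.1 (rho om w) *m @Genc p K L T m n s x.1.2 x.2.2 (rho om w)].
exists (fun v i j => if [pick x | prods x == [ffun w => v w]] is Some x
                     then blockA x.1.1 i *m blockB x.1.2 j else 0).
move=> A B Rr Ss i j.
case: pickP => [[[A' B'] [Rr' Ss']] /eqP /ffunP hx /= | hn]; last first.
  by have := hn ((A, B), (Rr, Ss)); rewrite eqxx.
apply/eqP; rewrite -subr_eq0; apply/eqP.
have H : forall w : 'I_(size ds), \sum_e (om ^+ w) ^+ (@af K L T r e.1 + @bg K L T e.2) *:
   (Xf A' Rr' e.1 *m Yg B' Ss' e.2 - Xf A Rr e.1 *m Yg B Ss e.2) = 0.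
  move=> w; have := hx w; rewrite !ffunE /= !prod_sum => e.
  under eq_bigr do rewrite scalerBr.
  by rewrite sumrB /rho e subrr.
have key := @group_lemma _ om q ds _ (fun e => @af K L T r e.1 + @bg K L T e.2)%N m s
  (fun e => Xf A' Rr' e.1 *m Yg B' Ss' e.2 - Xf A Rr e.1 *m Yg B Ss e.2)
  hq (undup_uniq _) hall (@deg_mem K L T r) H.
have hm : (i + K * j)%N \in ds by exact: (@deg_mem K L T r (inl i, inl j)).
have k0 : (index (i + K * j)%N ds < size ds)%N by rewrite index_mem.
have := key (Ordinal k0); rewrite /= nth_index //.
by rewrite (big_pred1 (inl i, inl j)) // => e; exact: deg_uniq.
Qed.

Lemma N_le_q K L T r q : (max_degree K L T r < q)%N -> (nworkers K L T r <= q)%N.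
Proof.
move=> hmax; rewrite -(size_iota 0 q); apply: uniq_leq_size; first exact: undup_uniq.
move=> x; rewrite mem_undup mem_iota add0n /= => hx; apply: leq_ltn_trans hmax.
exact: (@leq_bigmax_seq _ _ xpredT id x hx isT).
Qed.

Lemma prim_inj (F : fieldType) (z : F) q (w w' : nat) :
  q.-primitive_root z -> (w < q)%N -> (w' < q)%N -> z ^+ w = z ^+ w' -> w = w'.
Proof.
move=> hq hw hw' /eqP; rewrite (eq_prim_root_expr hq) !modn_small //; exact/eqP.
Qed.

Lemma prim_neq0 (F : fieldType) (z : F) q : (0 < q)%N -> q.-primitive_root z -> z != 0.
Proof.
move=> hq0 hq; apply/eqP => z0; have := prim_expr_order hq; rewrite z0 expr0n.
by case: q hq0 {hq} => // q' _ /eqP; rewrite eq_sym oner_eq0.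
Qed.

Theorem corollary1 (R : realType) (p : nat) (K L T q : nat) (omega : 'F_p)
    (m n s : nat) :
  prime p -> (1 <= L)%N -> (L <= K)%N -> (1 <= T)%N -> (0 < q)%N ->
  q.-primitive_root omega ->
  (* GASP_small (r = 1) *)
  ((max_degree K L T 1 < q)%N -> coprime q K ->
     @decodable p K L T 1 omega m n s /\ @T_private R p K L T 1 omega m n s)
  /\
  (* GASP_big (r = min(K, T)) *)
  ((max_degree K L T (minn K T) < q)%N ->
     @decodable p K L T (minn K T) omega m n s /\
     @T_private R p K L T (minn K T) omega m n s).
Proof.
move=> hp hL hLK hT hq0 hq.
have hom := prim_neq0 hq0 hq.
split.
- move=> hmax hcop; split; first exact: dec_ok hq hmax.
  have hN := N_le_q hmax.
  apply: (@priv R p K L T 1 omega m n s K) => //.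
  + by move=> t; rewrite /alpha_s /GAP nth_mkseq // /gap_term divn1 modn1 addn0.
  + move=> w w'; rewrite -!exprM !(mulnC _ K) !exprM => h; apply: val_inj.
    have hK : q.-primitive_root (omega ^+ K) by rewrite prim_root_exp_coprime // coprime_sym.
    exact: (prim_inj hK (leq_trans (ltn_ord w) hN) (leq_trans (ltn_ord w') hN) h).
  + move=> w w' h; apply: val_inj.
    exact: (prim_inj hq (leq_trans (ltn_ord w) hN) (leq_trans (ltn_ord w') hN) h).
- move=> hmax; split; first exact: dec_ok hq hmax.
  have hN := N_le_q hmax.
  apply: (@priv R p K L T (minn K T) omega m n s 1) => //.
  + move=> t; rewrite /alpha_s /GAP nth_mkseq // /gap_term muln1; congr (_ + _)%N.
    have ht := ltn_ord t.
    case: (leqP K T) => hKT.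
      by rewrite -divn_eq.
    by rewrite divn_small // mul0n add0n modn_small.
  + move=> w w'; rewrite !expr1 => h; apply: val_inj.
    exact: (prim_inj hq (leq_trans (ltn_ord w) hN) (leq_trans (ltn_ord w') hN) h).
  + move=> w w' h; apply: val_inj.
    exact: (prim_inj hq (leq_trans (ltn_ord w) hN) (leq_trans (ltn_ord w') hN) h).
Qed.
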